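(* There is a bijection $F : C_{n+1} \to S_n$ such that for each $\pi \in C_{n+1}$ and each $\ell \in [n]$, $\mathrm{Exc}(\pi) = \{1,\dots,\ell\}$ if and only if $\mathrm{DesBot}(F(\pi)) = \{1,\dots,\ell-1\}$.
   Context: $C_{n+1}$ is the set of $(n+1)$-cycles, i.e. permutations of $[n+1]$ consisting of a single cycle of length $n+1$. For $\pi \in S_{n+1}$, $\mathrm{Exc}(\pi) = \{i \in [n] : \pi(i) > i\}$. For $p \in S_n$, the descent bottoms set is $\mathrm{DesBot}(p) = \{p(i) : 2\le i\le n,\ p(i) < p(i-1)\}$. *)

(* Defs.v *)
From mathcomp Require Import all_boot all_order all_fingroup.
Set Implicit Arguments. Unset Strict Implicit. Unset Printing Implicit Defensive.

(* Permutations of [m] = {1,...,m} are modelled as 'S_m, acting on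
   'I_m = {0,...,m-1}; the element j : 'I_m stands for j+1 in [m].
   All sets below (Exc, DesBot) are predicates on nat in the paper's
   1-indexed convention. *)

Definition is_full_cycle (n : nat) (pi : 'S_n.+1) : bool := #|porbits pi| == 1.

Definition Cyc (n : nat) := sig (fun s : 'S_n.+1 => is_full_cycle s).

Definition Exc (n : nat) (pi : 'S_n.+1) (i : nat) : bool :=
  [exists j : 'I_n.+1, [&& j.+1 == i, j < n & j < pi j]].

Definition DesBot (n : nat) (p : 'S_n) (v : nat) : bool :=
  [exists i : 'I_n, exists j : 'I_n,
     [&& (i : nat) == j.+1, p i < p j & v == (p i).+1]].

(* Main.v *)
Require Import Defs.
From mathcomp Require Import all_boot all_order all_fingroup.
From mathcomp Require Import zify.
Set Implicit Arguments. Unset Strict Implicit. Unset Printing Implicit Defensive.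

Local Open Scope group_scope.
Section Cyc.
Variable n : nat.
Implicit Types s : 'S_n.+1.

Lemma full_porbit s : is_full_cycle s -> forall x y, y \in porbit s x.
Proof.
move=> H x y.
have P : forall z, porbit s z = porbit s x.
  move=> z; have [A EA] := cards1P H.
  have h1 : porbit s z \in porbits s by apply: imset_f.
  have h2 : porbit s x \in porbits s by apply: imset_f.
  by move: h1 h2; rewrite EA !inE => /eqP -> /eqP ->.
by rewrite -(P y) porbit_id.
Qed.

Lemma card_full s : is_full_cycle s -> forall x, #|porbit s x| = n.+1.
Proof.
move=> H x; rewrite -[RHS]card_ord; apply: eq_card => y.
by rewrite full_porbit.
Qed.

Lemma full_exp s (H : is_full_cycle s) x y : exists2 m, m < n.+1 & y = (s ^+ m) x.
Proof.
have := full_porbit H x y; rewrite porbit_traject card_full // => /trajectP[m lm ->].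
by exists m; rewrite // permX.
Qed.

Lemma full_inj s (H : is_full_cycle s) x a b : a < n.+1 -> b < n.+1 ->
  (s ^+ a) x = (s ^+ b) x -> a = b.
Proof.
move=> la lb; have U := uniq_traject_porbit s x; rewrite card_full // in U.
rewrite !permX -(nth_traject s la) -(nth_traject s lb) => E.
by apply/eqP; rewrite -(nth_uniq x _ _ U) ?size_traject // E.
Qed.

Lemma full_n1 s (H : is_full_cycle s) x : (s ^+ n.+1) x = x.
Proof. by rewrite permX; have := iter_porbit s x; rewrite card_full. Qed.

Lemma full_inv s : is_full_cycle s -> is_full_cycle s^-1.
Proof. by rewrite /is_full_cycle porbitsV. Qed.

Lemma aux (y : 'I_n.+1) (i : 'I_n) : y.-1 < n.
Proof. have := ltn_ord y; have := ltn_ord i; lia. Qed.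

Definition fv (p : 'S_n.+1) (i : 'I_n) : 'I_n := Ordinal (aux ((p^-1 ^+ i.+1) ord0) i).

Lemma full_nz s (H : is_full_cycle s) a : 0 < a < n.+1 -> (s ^+ a) ord0 != ord0.
Proof.
case/andP=> a0 an; apply/eqP=> E.
have := @full_inj s H ord0 a 0 an (ltn0Sn _); rewrite expg0 perm1 => /(_ E).
by move=> e; rewrite e in a0.
Qed.

Lemma fv_inj (p : 'S_n.+1) : is_full_cycle p -> injective (fv p).
Proof.
move=> H i j /(congr1 val) /= E.
have Hs := full_inv H.
have ni := @full_nz _ Hs i.+1; have nj := @full_nz _ Hs j.+1.
have li := ltn_ord i; have lj := ltn_ord j.
have : (p^-1 ^+ i.+1) ord0 = (p^-1 ^+ j.+1) ord0.
  apply/val_inj; move: ni nj; rewrite !ltnS li lj /= => /(_ isT) ni /(_ isT) nj.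
  move: ni nj E; rewrite -!val_eqE /=.
  move: (nat_of_ord _) (nat_of_ord _) => a b; lia.
move/(full_inj Hs); rewrite !ltnS => /(_ li lj) [] e; exact/val_inj.
Qed.

Definition F (pi : Cyc n) : 'S_n := perm (fv_inj (valP pi)).

Lemma FE (pi : Cyc n) i : (F pi i : nat) = (((sval pi)^-1 ^+ i.+1) ord0).-1.
Proof. by rewrite /F permE. Qed.

Definition sq (u : 'S_n) : seq 'I_n.+1 := ord0 :: [seq lift ord0 (u i) | i <- enum 'I_n].

Lemma sq_uniq u : uniq (sq u).
Proof.
rewrite /= map_inj_uniq ?enum_uniq ?andbT.
  by apply/mapP => -[i _] /eqP; rewrite (negbTE (neq_lift _ _)).
by move=> i j /lift_inj /perm_inj.
Qed.

Lemma sq_size u : size (sq u) = n.+1.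
Proof. by rewrite /= size_map size_enum_ord. Qed.

Lemma nth_sq u (i : 'I_n) : nth ord0 (sq u) i.+1 = lift ord0 (u i).
Proof.
rewrite /= (nth_map i) ?size_enum_ord ?nth_ord_enum //.
Qed.

Lemma mem_sq u x : x \in sq u.
Proof.
case: (unliftP ord0 x) => [j ->|->]; last by rewrite inE eqxx.
rewrite inE; apply/orP; right; apply/mapP; exists (u^-1 j); first by rewrite mem_enum.
by rewrite permKV.
Qed.

Definition sig (u : 'S_n) : 'S_n.+1 := perm (can_inj (prev_next (sq_uniq u))).

Lemma sig_exp u k : k < n.+1 -> (sig u ^+ k) ord0 = nth ord0 (sq u) k.
Proof.
elim: k => [|k IH] lk; first by rewrite expg0 perm1.
rewrite expgSr permM IH 1?ltnW // /sig permE next_nth mem_nth ?sq_size 1?ltnW //.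
rewrite index_uniq ?sq_size 1?ltnW // ?sq_uniq //.
Qed.

Lemma sig_full u : is_full_cycle (sig u).
Proof.
rewrite /is_full_cycle; apply/cards1P; exists (porbit (sig u) ord0).
apply/setP=> A; rewrite inE; apply/imsetP/eqP => [[x _ ->]|->]; last by exists ord0.
apply/eqP; rewrite eq_porbit_mem.
have xi := mem_sq u x; rewrite -index_mem sq_size in xi.
by rewrite -(nth_index ord0 (mem_sq u x)) -sig_exp // mem_porbit.
Qed.

Definition G (u : 'S_n) : Cyc n := exist _ (sig u)^-1 (full_inv (sig_full u)).

Lemma FG : cancel G F.
Proof.
move=> u; apply/permP => i; apply/val_inj.
by rewrite /= FE /= invgK sig_exp ?ltnS // nth_sq lift0.
Qed.

Lemma F_inj : injective F.
Proof.
move=> a b E; apply/val_inj => /=.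
case: a b E => p Hp [q Hq] /= E.
have Hs := full_inv Hp; have Ht := full_inv Hq.
have eqk : forall k, k < n.+2 -> (p^-1 ^+ k) ord0 = (q^-1 ^+ k) ord0.
  move=> [|k] lk; first by rewrite !expg0.
  case: (ltngtP k n) => [kn|nk|->]; last by rewrite !full_n1.
    2: by exfalso; move: lk nk; rewrite !ltnS; lia.
  have := congr1 (fun f : 'S_n => (f (Ordinal kn) : nat)) E; rewrite !FE /=.
  have := @full_nz _ Hs k.+1; have := @full_nz _ Ht k.+1.
  rewrite !ltnS kn => /(_ isT) n1 /(_ isT) n2 e; apply/val_inj.
  move: n1 n2 e; rewrite -!val_eqE /=; move: (nat_of_ord _) (nat_of_ord _) => a b; lia.
suff: p^-1 = q^-1 by apply: invg_inj.
apply/permP => x; have [m lm ->] := full_exp Hs ord0 x.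
have e1 : p^-1 ((p^-1 ^+ m) ord0) = (p^-1 ^+ m.+1) ord0 by rewrite expgSr permM.
have e2 : q^-1 ((q^-1 ^+ m) ord0) = (q^-1 ^+ m.+1) ord0 by rewrite expgSr permM.
by rewrite e1 (eqk m) 1?ltnW // e2 eqk.
Qed.

Lemma pstep (p : 'S_n.+1) m : p ((p^-1 ^+ m.+1) ord0) = (p^-1 ^+ m) ord0.
Proof. by rewrite expgSr permM permKV. Qed.

Lemma DesBot0 (u : 'S_n) : DesBot u 0 = false.
Proof.
by apply/existsP=> -[i /existsP[j /and3P[_ _]]].
Qed.

Lemma ExcE (pi : Cyc n) : 0 < n ->
  forall k, Exc (sval pi) k = (k == 1%N) || DesBot (F pi) k.-1.
Proof.
case: pi => p H n0 k /=.
have Hs := full_inv H.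
have nz := @full_nz _ Hs.
apply/idP/idP.
- case/existsP => x /and3P[/eqP kx xn xl].
  have [m lm ex] := full_exp Hs ord0 x.
  case: m lm ex => [|[|m]] lm ex.
  + by rewrite -kx ex expg0 perm1.
  + by move: xl; rewrite ex pstep expg0 perm1 ltn0.
  apply/orP; right.
  have li : m.+1 < n by rewrite -ltnS.
  have lj : m < n by rewrite ltnW.
  apply/existsP; exists (Ordinal li); apply/existsP; exists (Ordinal lj).
  have xnz := nz m.+2 lm; rewrite -ex in xnz.
  have px : p x = (p^-1 ^+ m.+1) ord0 by rewrite ex pstep.
  rewrite /= eqxx /=.
  have E1 : (F (exist _ p H) (Ordinal li) : nat) = x.-1 by rewrite FE /= -ex.
  have E2 : (F (exist _ p H) (Ordinal lj) : nat) = (p x).-1 by rewrite FE /= px.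
  rewrite E1 E2; move: xnz xl kx; rewrite -val_eqE /=.
  move: (nat_of_ord x) (nat_of_ord (p x)) => a b; lia.
- case/orP.
  + move/eqP=> ->; apply/existsP; exists ord0; rewrite /= n0 /=.
    have e : p ord0 = (p^-1 ^+ n) ord0.
      by rewrite -[in LHS](full_n1 Hs ord0) pstep.
    rewrite e; have := nz n; rewrite n0 ltnSn => /(_ isT).
    by rewrite -val_eqE /=; move: (nat_of_ord _) => a; lia.
  + case/existsP => i /existsP[j /and3P[/eqP ij lt /eqP kv]].
    move: lt kv; rewrite !FE /=.
    have Ei : (p^-1 ^+ i.+1) ord0 = (p^-1 ^+ i.+1) ord0 by [].
    set x := (p^-1 ^+ i.+1) ord0.
    have px : p x = (p^-1 ^+ j.+1) ord0 by rewrite /x pstep ij.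
    have xnz : x != ord0 by apply: nz; have := ltn_ord i; lia.
    rewrite -px => lt kv; apply/existsP; exists x.
    move: lt kv; have := ltn_ord (p x); move: xnz; rewrite -val_eqE /=.
    move: (nat_of_ord x) (nat_of_ord (p x)) => a b; lia.
Qed.
End Cyc.
Local Close Scope group_scope.

Theorem mainTheorem8 (n : nat) :
  exists F : Cyc n -> 'S_n,
    bijective F /\
    forall (pi : Cyc n) (l : nat), 1 <= l <= n ->
      ((forall k : nat, Exc (sval pi) k = (1 <= k <= l)) <->
       (forall k : nat, DesBot (F pi) k = (1 <= k <= l - 1))).
Proof.
exists (@F n); split.
  exists (@G n); last exact: FG.
  by move=> a; apply: F_inj; rewrite FG.
move=> pi l /andP[l1 ln].
have n0 : 0 < n by apply: leq_trans ln.
have E := ExcE pi n0.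
split=> H k.
- case: k => [|k]; first by rewrite DesBot0.
  have := H k.+2; rewrite E /=.
  move=> ->; apply/idP/idP; lia.
- rewrite E; case: k => [|[|k]] /=; rewrite ?DesBot0 ?H //; lia.
Qed.
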